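(* Let $L$ be a C-loop with nucleus $N$. Then the factor loop $L/N$ is a Steiner loop.
   Context: A C-loop is a loop satisfying $x(y(yz))=((xy)y)z$ for all $x,y,z$. The nucleus $N$ of a loop is the set of elements $a$ with $a(yz)=(ay)z$, $y(az)=(ya)z$, $y(za)=(yz)a$ for all $y,z$; in a C-loop it is a normal subloop (normal meaning $xN=Nx$, $x(yN)=(xy)N$, $x(Ny)=(xN)y$ for all $x,y$), and $L/N$ is the factor loop of cosets. A Steiner loop is a loop with neutral element $e$ satisfying $xx=e$, $(yx)x=y$, $xy=yx$ for all $x,y$. *)

(* Defs.v *)
From Stdlib Require Import ClassicalEpsilon.

Set Implicit Arguments.

Section Loops.
Variable T : Type.
Variable mul : T -> T -> T.
Local Infix "*" := mul.

Definition is_loop (e : T) : Prop :=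
  (forall x, e * x = x /\ x * e = x) /\
  (forall a b, exists! x, a * x = b) /\
  (forall a b, exists! y, y * a = b).

Definition C_law : Prop :=
  forall x y z, x * (y * (y * z)) = ((x * y) * y) * z.

Definition is_C_loop (e : T) : Prop := is_loop e /\ C_law.

Definition is_steiner_loop (e : T) : Prop :=
  is_loop e /\
  (forall x, x * x = e) /\
  (forall x y, (y * x) * x = y) /\
  (forall x y, x * y = y * x).

Definition nucleus (a : T) : Prop :=
  forall y z,
    a * (y * z) = (a * y) * z /\
    y * (a * z) = (y * a) * z /\
    y * (z * a) = (y * z) * a.

Definition ncoset (x : T) : T -> Prop :=
  fun z => exists n, nucleus n /\ z = x * n.

End Loops.

(* The factor loop L/N: its elements are the cosets xN (as subsets of T),
   with multiplication (xN)(yN) = (xy)N and neutral element eN = N. *)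
Record factor (T : Type) (mul : T -> T -> T) : Type := Factor {
  fset : T -> Prop;
  fset_coset : exists x, fset = ncoset mul x
}.

Definition frep T (mul : T -> T -> T) (c : factor mul) : T :=
  proj1_sig (constructive_indefinite_description _ (fset_coset c)).

Definition fcoset T (mul : T -> T -> T) (x : T) : factor mul :=
  @Factor T mul (ncoset mul x) (ex_intro _ x eq_refl).

Definition fmul T (mul : T -> T -> T) (c d : factor mul) : factor mul :=
  fcoset mul (mul (frep c) (frep d)).

Definition fone T (mul : T -> T -> T) (e : T) : factor mul := fcoset mul e.

(* Main.v *)
Require Import Defs.
From Stdlib Require Import ClassicalEpsilon FunctionalExtensionality PropExtensionality ProofIrrelevance.

Section CL.
Variable T : Type.
Variable mul : T -> T -> T.
Variable e : T.
Local Infix "*" := mul.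
Hypothesis hL : is_C_loop mul e.

Let N := nucleus mul.

Lemma eL x : e * x = x. Proof. apply (proj1 (proj1 hL)). Qed.
Lemma eR x : x * e = x. Proof. apply (proj1 (proj1 hL)). Qed.
Lemma HC x y z : x * (y * (y * z)) = ((x * y) * y) * z. Proof. apply (proj2 hL). Qed.
Lemma solL a b : exists! x, a * x = b. Proof. apply (proj1 (proj2 (proj1 hL))). Qed.
Lemma solR a b : exists! y, y * a = b. Proof. apply (proj2 (proj2 (proj1 hL))). Qed.

Lemma cancL a x y : a * x = a * y -> x = y.
Proof. intro H. destruct (solL a (a * y)) as [z [_ Hz]].
  rewrite <- (Hz x H), <- (Hz y eq_refl). reflexivity. Qed.
Lemma cancR a x y : x * a = y * a -> x = y.
Proof. intro H. destruct (solR a (y * a)) as [z [_ Hz]].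
  rewrite <- (Hz x H), <- (Hz y eq_refl). reflexivity. Qed.

Lemma LC y z : y * (y * z) = (y * y) * z.
Proof. rewrite <- (eL (y * (y * z))), HC, eL. reflexivity. Qed.
Lemma RC x y : x * (y * y) = (x * y) * y.
Proof. pose proof (HC x y e) as H. rewrite !eR in H. exact H. Qed.

Definition inv (a : T) : T :=
  proj1_sig (constructive_indefinite_description _ (solL a e)).
Lemma invR a : a * inv a = e.
Proof. unfold inv. destruct (constructive_indefinite_description _ _) as [x Hx]. simpl. exact (proj1 Hx). Qed.

Lemma RIP w y : (w * y) * inv y = w.
Proof. destruct (solR y w) as [x [Hx _]]. subst w.
  pose proof (HC x y (inv y)) as H. rewrite invR, eR in H. auto. Qed.

Lemma invL y : inv y * y = e.
Proof. destruct (solR y e) as [l [Hl _]].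
  assert (LIP : forall u, l * (y * u) = u).
  { intro u. destruct (solL y u) as [z [Hz _]]. subst u.
    rewrite HC, Hl, eL. reflexivity. }
  pose proof (LIP (inv y)) as H. rewrite invR, eR in H. rewrite <- H. exact Hl. Qed.

Lemma LIP y u : inv y * (y * u) = u.
Proof. destruct (solL y u) as [z [Hz _]]. subst u.
  rewrite HC, invL, eL. reflexivity. Qed.

Lemma invinv y : inv (inv y) = y.
Proof. apply (cancL (inv y)). rewrite invR, invL. reflexivity. Qed.

Lemma LIP' y u : y * (inv y * u) = u.
Proof. rewrite <- (invinv y) at 1. apply LIP. Qed.
Lemma RIP' w y : (w * inv y) * y = w.
Proof. rewrite <- (invinv y) at 2. apply RIP. Qed.

Lemma invM x y : inv (x * y) = inv y * inv x.
Proof.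
  assert (H : inv (x * y) * x = inv y).
  { rewrite <- (RIP x y) at 2. apply LIP. }
  rewrite <- H. rewrite RIP. reflexivity. Qed.

Lemma middle_nuc a : (forall x z, x * (a * z) = (x * a) * z) -> N a.
Proof. intro Hm.
  assert (F : forall x z, a * z = inv x * ((x * a) * z)).
  { intros x z. rewrite <- Hm. rewrite LIP. reflexivity. }
  intros y z. split; [|split].
  - rewrite (F (inv y * inv a) (y * z)).
    rewrite RIP', invM, !invinv, LIP. reflexivity.
  - apply Hm.
  - assert (G : forall x w, (x * w) * (inv w * a) = x * a).
    { intros x w. rewrite <- (RIP (x * a) (inv a * w)).
      rewrite <- Hm, LIP', invM, invinv. reflexivity. }
    pose proof (G (y * z) (inv z)) as H. rewrite RIP, invinv in H.
    exact H. Qed.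

Lemma sq_nuc y : N (y * y).
Proof. apply middle_nuc. intros x z. rewrite <- LC, HC, RC. reflexivity. Qed.

Lemma nucM a b : N a -> N b -> N (a * b).
Proof. intros Ha Hb y z.
  pose proof (fun u v => proj1 (Ha u v)) as A1.
  pose proof (fun u v => proj1 (proj2 (Ha u v))) as A2.
  pose proof (fun u v => proj2 (proj2 (Ha u v))) as A3.
  pose proof (fun u v => proj1 (Hb u v)) as B1.
  pose proof (fun u v => proj1 (proj2 (Hb u v))) as B2.
  pose proof (fun u v => proj2 (proj2 (Hb u v))) as B3.
  split; [|split].
  - rewrite <- (A1 b (y * z)), (B1 y z), (A1 (b * y) z), (A1 b y). reflexivity.
  - rewrite <- (A1 b z), (A2 y (b * z)), (B2 (y * a) z), (B3 y a). reflexivity.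
  - rewrite (B3 z a), (B3 y (z * a)), (A3 y z), <- (B3 (y * z) a). reflexivity.
Qed.

Lemma inv_sq y : inv y = y * (inv y * inv y).
Proof. rewrite RC, invR, eL. reflexivity. Qed.
Lemma inv_sq' y : inv y = (inv y * inv y) * y.
Proof. rewrite <- LC, invL, eR. reflexivity. Qed.

Lemma nucI a : N a -> N (inv a).
Proof. intro Ha. rewrite inv_sq. apply nucM; auto. apply sq_nuc. Qed.

Lemma nucE : N e.
Proof. intros y z. rewrite !eL, !eR. auto. Qed.

Lemma conj_c n x : N n -> exists c, N c /\ (x * n) * x = c.
Proof. intro Hn. exists (((x * n) * (x * n)) * inv n). split.
  - apply nucM; [apply sq_nuc | apply nucI; auto].
  - apply (cancR n).
    rewrite <- (proj2 (proj2 (Hn ((x * n) * (x * n)) (inv n)))), invL, eR.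
    rewrite (proj2 (proj2 (Hn (x * n) x))). reflexivity. Qed.

Lemma norm1 n x : N n -> exists n', N n' /\ n * x = x * n'.
Proof. intro Hn. destruct (conj_c n x Hn) as [c [Hc E]].
  exists ((inv x * inv x) * c). split.
  - apply nucM; auto. apply sq_nuc.
  - rewrite <- (proj1 (proj2 (Hn _ _))) in E.
    rewrite <- (LIP x (n * x)), E.
    rewrite (proj2 (proj2 (Hc _ _))), <- inv_sq. reflexivity. Qed.

Lemma norm2 n x : N n -> exists n', N n' /\ x * n = n' * x.
Proof. intro Hn. destruct (conj_c n x Hn) as [c [Hc E]].
  exists (c * (inv x * inv x)). split.
  - apply nucM; auto. apply sq_nuc.
  - rewrite <- (RIP (x * n) x), E.
    rewrite <- (proj1 (Hc _ _)), <- inv_sq'. reflexivity. Qed.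

Lemma comm_c x y : exists n, N n /\ y * x = (x * y) * n.
Proof.
  set (a := inv y * inv y). set (b := inv x * inv x).
  set (t := inv (x * y) * inv (x * y)).
  assert (Ha : N a) by apply sq_nuc. assert (Hb : N b) by apply sq_nuc.
  assert (Ht : N t) by apply sq_nuc.
  destruct (norm1 a x Ha) as [a' [Ha' Ea]].
  assert (E : (x * y) * t = (y * x) * (a' * b)).
  { unfold t. rewrite <- inv_sq, invM, inv_sq, (inv_sq x). fold a b.
    rewrite (proj2 (proj2 (Hb (y * a) x))), <- (proj1 (proj2 (Ha y x))), Ea.
    rewrite (proj2 (proj2 (Ha' y x))), (proj2 (proj2 (Hb (y * x) a'))). reflexivity. }
  exists (t * inv (a' * b)). split.
  - apply nucM; auto. apply nucI. apply nucM; auto.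
  - assert (Hi : N (inv (a' * b))) by (apply nucI; apply nucM; auto).
    rewrite (proj2 (proj2 (Hi _ _))), E, RIP. reflexivity. Qed.

Lemma coset_eq x y n : N n -> x = y * n -> ncoset mul x = ncoset mul y.
Proof. intros Hn E. apply functional_extensionality. intro z.
  apply propositional_extensionality. unfold ncoset. split.
  - intros [m [Hm Ez]]. exists (n * m). split. apply nucM; auto.
    subst. symmetry. apply (proj2 (proj2 (Hm _ _))).
  - intros [m [Hm Ez]]. exists (inv n * m). split. apply nucM; auto. apply nucI; auto.
    subst. rewrite <- (proj1 (proj2 (Hn _ _))). rewrite LIP'. reflexivity. Qed.

Lemma coset_inv x y : ncoset mul x = ncoset mul y -> exists n, N n /\ x = y * n.
Proof. intro E. assert (H : ncoset mul x x) by (exists e; split; [apply nucE | rewrite eR; auto]).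
  rewrite E in H. exact H. Qed.

Lemma factor_ext (c d : factor mul) : fset c = fset d -> c = d.
Proof. destruct c as [f p], d as [g q]. simpl. intro H. subst g.
  f_equal. apply proof_irrelevance. Qed.

Lemma frep_spec (c : factor mul) : c = fcoset mul (frep c).
Proof. apply factor_ext. unfold frep, fcoset. simpl.
  destruct (constructive_indefinite_description _ _) as [x Hx]. exact Hx. Qed.

Lemma fcoset_eq x y n : N n -> x = y * n -> fcoset mul x = fcoset mul y.
Proof. intros. apply factor_ext. simpl. eapply coset_eq; eauto. Qed.

Lemma fcoset_inv x y : fcoset mul x = fcoset mul y -> exists n, N n /\ x = y * n.
Proof. intro H. apply coset_inv. apply (f_equal (@fset _ _) H). Qed.

Lemma fmul_coset x y : fmul (fcoset mul x) (fcoset mul y) = fcoset mul (x * y).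
Proof. unfold fmul.
  destruct (fcoset_inv (frep (fcoset mul x)) x) as [n [Hn En]].
  { symmetry. apply frep_spec. }
  destruct (fcoset_inv (frep (fcoset mul y)) y) as [m [Hm Em]].
  { symmetry. apply frep_spec. }
  rewrite En, Em.
  destruct (norm1 n y Hn) as [n' [Hn' E']].
  apply (fcoset_eq _ _ (n' * m)). apply nucM; auto.
  rewrite (proj2 (proj2 (Hm (x * n) y))), <- (proj1 (proj2 (Hn x y))), E'.
  rewrite (proj2 (proj2 (Hn' x y))), (proj2 (proj2 (Hm (x * y) n'))). reflexivity. Qed.

Lemma all_coset (c : factor mul) : exists x, c = fcoset mul x.
Proof. exists (frep c). apply frep_spec. Qed.

End CL.
Arguments all_coset {T mul} c.
Arguments fmul_coset {T mul e} hL x y.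
Arguments solL {T mul e} hL a b.
Arguments solR {T mul e} hL a b.
Arguments fcoset_inv {T mul e} hL x y.
Arguments fcoset_eq {T mul e} hL x y n.
Arguments cancL {T mul e} hL a x y.
Arguments cancR {T mul e} hL a x y.
Arguments norm2 {T mul e} hL n x.
Arguments comm_c {T mul e} hL x y.
Arguments sq_nuc {T mul e} hL y.
Arguments RC {T mul e} hL x y.
Arguments eL {T mul e} hL x.
Arguments eR {T mul e} hL x.

Theorem proposition2p6 (T : Type) (mul : T -> T -> T) (e : T)
  (hL : is_C_loop mul e) :
  is_steiner_loop (@fmul T mul) (fone mul e).
Proof.
  unfold fone. split; [split; [|split] | split; [|split]].
  - intro c. destruct (all_coset c) as [x ->].
    rewrite !(fmul_coset hL), (eL hL), (eR hL); auto.
  - intros a b. destruct (all_coset a) as [a0 ->]. destruct (all_coset b) as [b0 ->].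
    destruct (solL hL a0 b0) as [x0 [Hx _]].
    exists (fcoset mul x0). split.
    + rewrite (fmul_coset hL), Hx; auto.
    + intros c Hc. destruct (all_coset c) as [c0 ->].
      rewrite (fmul_coset hL) in Hc. rewrite <- Hx in Hc.
      destruct (fcoset_inv hL _ _ Hc) as [n [Hn En]].
      rewrite <- (proj2 (proj2 (Hn _ _))) in En.
      apply (cancL hL) in En. symmetry. apply (fcoset_eq hL _ _ _ Hn En).
  - intros a b. destruct (all_coset a) as [a0 ->]. destruct (all_coset b) as [b0 ->].
    destruct (solR hL a0 b0) as [x0 [Hx _]].
    exists (fcoset mul x0). split.
    + rewrite (fmul_coset hL), Hx; auto.
    + intros c Hc. destruct (all_coset c) as [c0 ->].
      rewrite (fmul_coset hL) in Hc. rewrite <- Hx in Hc.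
      destruct (fcoset_inv hL _ _ Hc) as [n [Hn En]].
      destruct (norm2 hL n a0 Hn) as [n' [Hn' E']].
      rewrite <- (proj2 (proj2 (Hn _ _))), E', (proj1 (proj2 (Hn' _ _))) in En.
      apply (cancR hL) in En. symmetry. apply (fcoset_eq hL _ _ _ Hn' En).
  - intro c. destruct (all_coset c) as [x ->]. rewrite (fmul_coset hL).
    apply (fcoset_eq hL _ _ (mul x x)). apply (sq_nuc hL). rewrite (eL hL); auto.
  - intros c d. destruct (all_coset c) as [x ->]. destruct (all_coset d) as [y ->].
    rewrite !(fmul_coset hL).
    apply (fcoset_eq hL _ _ (mul x x)). apply (sq_nuc hL). symmetry; apply (RC hL).
  - intros c d. destruct (all_coset c) as [x ->]. destruct (all_coset d) as [y ->].
    rewrite !(fmul_coset hL).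
    destruct (comm_c hL y x) as [n [Hn E]].
    apply (fcoset_eq hL _ _ n); auto.
Qed.
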